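(* Let $q$ be a prime. For integers $a,b,m,\lambda$ with $\gcd(am\lambda,q)=1$ and a real number $N\geqslant 1$, define \[ U_{a,b,\lambda}(m,N)=\sum_{n\leqslant N}\ \sum_{\substack{x\in\{0,1,\ldots,q-1\}\\ x^2\equiv amn+b \bmod q}} \exp(2\pi i \lambda x/q), \] where $n$ runs over positive integers $n\leqslant N$. Then \[ U_{a,b,\lambda}(m,N)\ll q^{1/2}\log q, \] uniformly over all real $N\geqslant 1$ and all integers $a,b,m,\lambda$ with $\gcd(am\lambda,q)=1$.
   Context: $q$ is a (large) prime number and $\mathbb{F}_q$ is represented by $\{0,1,\ldots,q-1\}$. The notation $X\ll Y$ means $|X|\leqslant cY$ for an absolute constant $c>0$. *)

(* Defs.v *)
From Stdlib Require Import Reals ZArith List Znumtheory.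
From Coquelicot Require Import Coquelicot.
Open Scope R_scope.

Definition e (t : R) : C := (cos (2 * PI * t), sin (2 * PI * t)).

Definition Csum (l : list C) : C := fold_right Cplus (RtoC 0) l.

(* floor of N via Stdlib's Int_part (Int_part N = up N - 1 = floor N) *)
Definition n_range (N : R) : list nat := List.seq 1 (Z.to_nat (Int_part N)).

Definition x_range (q : Z) : list Z :=
  List.map Z.of_nat (List.seq 0 (Z.to_nat q)).

Definition U (q a b m lam : Z) (N : R) : C :=
  Csum (List.map (fun n : nat =>
    Csum (List.map (fun x : Z => e (IZR lam * IZR x / IZR q))
      (List.filter (fun x : Z =>
         Z.eqb (Z.modulo (x * x - (a * m * Z.of_nat n + b)) q) 0)
         (x_range q))))
    (n_range N)).

(* Main.v *)
Require Import Defs.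
From Stdlib Require Import Reals ZArith List Znumtheory Lra Lia.
From Coquelicot Require Import Coquelicot.
Open Scope R_scope.

Lemma e_add a b : e (a + b) = (e a * e b)%C.
Proof.
  unfold e, Cmult; simpl.
  replace (2 * PI * (a + b)) with (2 * PI * a + 2 * PI * b) by ring.
  rewrite cos_plus, sin_plus. f_equal; ring.
Qed.

Lemma e_nat t (k : nat) : e (t + INR k) = e t.
Proof.
  unfold e.
  replace (2 * PI * (t + INR k)) with (2 * PI * t + 2 * INR k * PI) by ring.
  rewrite cos_period, sin_period. reflexivity.
Qed.

Lemma e_int t (k : Z) : e (t + IZR k) = e t.
Proof.
  destruct (Z_le_gt_dec 0 k).
  - rewrite <- (Z2Nat.id k) by lia. rewrite <- INR_IZR_INZ. apply e_nat.
  - set (j := Z.to_nat (- k)).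
    assert (IZR k = - INR j).
    { unfold j. rewrite INR_IZR_INZ, Z2Nat.id by lia. rewrite opp_IZR. f_equal; ring. }
    rewrite H. rewrite <- (e_nat (t + - INR j) j). f_equal. ring.
Qed.

Definition psi (q k : Z) : C := e (IZR k / IZR q).

Section Psi.
Variable q : Z.
Hypothesis hq : (0 < q)%Z.

Lemma IZRq_neq : IZR q <> 0.
Proof. apply not_0_IZR. lia. Qed.

Lemma psi_add k l : psi q (k + l) = (psi q k * psi q l)%C.
Proof.
  unfold psi. rewrite <- e_add. f_equal. rewrite plus_IZR. field. apply IZRq_neq.
Qed.

Lemma psi_per k j : psi q (k + q * j) = psi q k.
Proof.
  unfold psi. rewrite <- (e_int (IZR k / IZR q) j). f_equal. rewrite plus_IZR, mult_IZR.
  field. apply IZRq_neq.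
Qed.

Lemma psi_mod k : psi q k = psi q (k mod q).
Proof.
  rewrite (Z.div_mod k q) at 1 by lia. rewrite Z.add_comm. apply psi_per.
Qed.

Lemma psi_div k : (q | k)%Z -> psi q k = 1%C.
Proof.
  intros [j ->]. replace (j * q)%Z with (0 + q * j)%Z by ring. rewrite psi_per.
  unfold psi, e. rewrite Rdiv_0_l, Rmult_0_r, cos_0, sin_0. reflexivity.
Qed.

Lemma Cmod_e t : Cmod (e t) = 1.
Proof.
  unfold Cmod, e. cbn [fst snd].
  replace (cos (2 * PI * t) ^ 2 + sin (2 * PI * t) ^ 2) with 1. apply sqrt_1.
  rewrite <- (sin2_cos2 (2 * PI * t)). unfold Rsqr. ring.
Qed.

Lemma Cmod_psi k : Cmod (psi q k) = 1.
Proof. apply Cmod_e. Qed.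

Lemma psi_conj k : Cconj (psi q k) = psi q (- k).
Proof.
  unfold psi, e, Cconj; simpl. rewrite opp_IZR.
  replace (2 * PI * (- IZR k / IZR q)) with (- (2 * PI * (IZR k / IZR q))).
  2:{ field. apply IZRq_neq. }
  rewrite cos_neg, sin_neg. reflexivity.
Qed.

End Psi.

Lemma Cmod_e_sub1 t : Cmod (e t - 1)%C = 2 * Rabs (sin (PI * t)).
Proof.
  unfold Cmod, e; cbn [fst snd Cminus Cplus Copp].
  replace (2 * PI * t) with (2 * (PI * t)) by ring.
  rewrite cos_2a_sin, sin_2a.
  match goal with |- sqrt ?X = _ => replace X with (Rsqr (2 * sin (PI * t))) end.
  2:{ cbn [fst snd RtoC].
      pose proof (sin2_cos2 (PI * t)). unfold Rsqr in *. nra. }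
  rewrite sqrt_Rsqr_abs, Rabs_mult, (Rabs_right 2) by lra.
  reflexivity.
Qed.

Fixpoint cs (n : nat) (f : nat -> C) : C :=
  match n with O => RtoC 0 | S n => (cs n f + f n)%C end.
Fixpoint rs (n : nat) (f : nat -> R) : R :=
  match n with O => 0 | S n => rs n f + f n end.

Lemma cs_ext n f g : (forall i, (i < n)%nat -> f i = g i) -> cs n f = cs n g.
Proof. induction n; simpl; intros; auto. rewrite IHn by auto. rewrite H by lia. auto. Qed.

Lemma rs_ext n f g : (forall i, (i < n)%nat -> f i = g i) -> rs n f = rs n g.
Proof. induction n; simpl; intros; auto. rewrite IHn by auto. rewrite H by lia. auto. Qed.

Lemma rs_le n f g : (forall i, (i < n)%nat -> f i <= g i) -> rs n f <= rs n g.
Proof. induction n; simpl; intros. lra. pose proof (H n ltac:(lia)). pose proof (IHn ltac:(auto)). lra. Qed.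

Lemma cs_plus n f g : cs n (fun i => f i + g i)%C = (cs n f + cs n g)%C.
Proof. induction n; simpl. apply injective_projections; simpl; ring. rewrite IHn. ring. Qed.

Lemma rs_plus n f g : rs n (fun i => f i + g i) = rs n f + rs n g.
Proof. induction n; simpl. ring. rewrite IHn. ring. Qed.

Lemma cs_scal n c f : cs n (fun i => c * f i)%C = (c * cs n f)%C.
Proof. induction n; simpl. apply injective_projections; simpl; ring. rewrite IHn. ring. Qed.

Lemma rs_scal n c f : rs n (fun i => c * f i) = c * rs n f.
Proof. induction n; simpl. ring. rewrite IHn. ring. Qed.

Lemma cs_scal_r n c f : cs n (fun i => f i * c)%C = (cs n f * c)%C.
Proof. rewrite Cmult_comm, <- cs_scal. apply cs_ext. intros; ring. Qed.

Lemma cs_zero n : cs n (fun _ => RtoC 0) = RtoC 0.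
Proof. induction n; simpl; auto. rewrite IHn. ring. Qed.

Lemma cs_exch n m (f : nat -> nat -> C) :
  cs n (fun i => cs m (fun j => f i j)) = cs m (fun j => cs n (fun i => f i j)).
Proof.
  induction n; simpl.
  - symmetry. apply cs_zero.
  - rewrite IHn, <- cs_plus. reflexivity.
Qed.

Lemma cs_front n f : cs (S n) f = (f O + cs n (fun i => f (S i)))%C.
Proof. induction n; simpl in *. ring. rewrite IHn. ring. Qed.

Lemma rs_front n f : rs (S n) f = f O + rs n (fun i => f (S i)).
Proof. induction n; simpl in *. ring. rewrite IHn. ring. Qed.

Lemma Cmod_cs n f : Cmod (cs n f) <= rs n (fun i => Cmod (f i)).
Proof.
  induction n; simpl. rewrite Cmod_0. lra.
  eapply Rle_trans. apply Cmod_triangle. lra.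
Qed.

Lemma rs_const n c : rs n (fun _ => c) = INR n * c.
Proof. induction n; simpl rs. simpl; ring. rewrite IHn, S_INR. ring. Qed.

Lemma cs_const n c : cs n (fun _ => c) = (RtoC (INR n) * c)%C.
Proof. induction n; simpl cs. simpl. apply injective_projections; simpl; ring.
  rewrite IHn, S_INR. rewrite RtoC_plus. ring. Qed.

Lemma cs_conj n f : Cconj (cs n f) = cs n (fun i => Cconj (f i)).
Proof. induction n; simpl. apply injective_projections; simpl; ring. rewrite Cplus_conj, IHn. auto. Qed.

Lemma rs_rev n f : rs n (fun i => f (n - 1 - i)%nat) = rs n f.
Proof.
  induction n. reflexivity.
  rewrite rs_front. simpl rs at 2.
  replace (S n - 1 - 0)%nat with n by lia. rewrite <- IHn.
  rewrite Rplus_comm. f_equal. apply rs_ext. intros. f_equal. lia.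
Qed.

Lemma cs_shift1 Q (f : Z -> C) :
  f (Z.of_nat Q) = f 0%Z ->
  cs Q (fun i => f (Z.of_nat i + 1)%Z) = cs Q (fun i => f (Z.of_nat i)).
Proof.
  intros H.
  assert (cs (S Q) (fun i => f (Z.of_nat i)) = cs (S Q) (fun i => f (Z.of_nat i))) by reflexivity.
  rewrite cs_front in H0 at 1. cbn [cs] in H0. rewrite H in H0. change (Z.of_nat 0) with 0%Z in H0.
  assert (cs Q (fun i => f (Z.of_nat (S i))) = cs Q (fun i => f (Z.of_nat i))).
  { match goal with |- ?X = ?Y => replace X with ((f 0%Z + X) - f 0%Z)%C by ring end.
    rewrite H0. ring. }
  rewrite <- H1. apply cs_ext. intros. f_equal. lia.
Qed.

Lemma cs_shift Q (f : Z -> C) (s : nat) :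
  (forall x, f (x + Z.of_nat Q)%Z = f x) ->
  cs Q (fun i => f (Z.of_nat i + Z.of_nat s)%Z) = cs Q (fun i => f (Z.of_nat i)).
Proof.
  intros Hp. induction s.
  - apply cs_ext; intros. f_equal. lia.
  - rewrite <- IHs.
    rewrite <- (cs_shift1 Q (fun x => f (x + Z.of_nat s)%Z)).
    + apply cs_ext; intros. f_equal. lia.
    + rewrite <- (Hp (0 + Z.of_nat s)%Z). f_equal. lia.
Qed.

Section Orth.
Variable q : Z.
Variable Q : nat.
Hypothesis HQ : Z.of_nat Q = q.
Hypothesis hq1 : (1 < q)%Z.

Lemma hq0 : (0 < q)%Z. Proof. lia. Qed.

Lemma psi_ne1 k : ~ (q | k)%Z -> psi q k <> RtoC 1.
Proof.
  intros Hk Heq.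
  rewrite (psi_mod q hq0) in Heq.
  assert (Hr : (0 < k mod q < q)%Z).
  { pose proof (Z.mod_pos_bound k q hq0).
    destruct (Z.eq_dec (k mod q) 0). { exfalso; apply Hk. apply Z.mod_divide; lia. } lia. }
  assert (Cmod (psi q (k mod q) - 1)%C = 0) by (rewrite Heq; replace (1 - 1)%C with (RtoC 0) by ring; apply Cmod_0).
  unfold psi in H. rewrite Cmod_e_sub1 in H.
  assert (0 < sin (PI * (IZR (k mod q) / IZR q))).
  { apply sin_gt_0.
    - apply Rmult_lt_0_compat. apply PI_RGT_0. apply Rdiv_lt_0_compat; apply IZR_lt; lia.
    - rewrite <- (Rmult_1_r PI) at 2. apply Rmult_lt_compat_l. apply PI_RGT_0.
      apply Rlt_div_l. apply IZR_lt; lia. rewrite Rmult_1_l. apply IZR_lt; lia. }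
  rewrite Rabs_right in H by lra. lra.
Qed.

Lemma orth_nd k : ~ (q | k)%Z -> cs Q (fun i => psi q (k * Z.of_nat i)) = RtoC 0.
Proof.
  intros Hk. set (S := cs Q (fun i => psi q (k * Z.of_nat i))).
  assert (E : (S * psi q k)%C = S).
  { unfold S. rewrite <- cs_scal_r.
    rewrite <- (cs_shift1 Q (fun x => psi q (k * x))).
    - apply cs_ext. intros. rewrite <- psi_add by apply hq0. f_equal. ring.
    - rewrite HQ. rewrite psi_div by (apply hq0 || (exists k; ring)).
      rewrite psi_div. auto. apply hq0. exists 0%Z. ring. }
  pose proof (psi_ne1 k Hk).
  assert (psi q k - 1 <> RtoC 0)%C.
  { intro. apply H. replace (psi q k) with ((psi q k - 1) + 1)%C by ring. rewrite H0. ring. }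
  replace S with ((S * psi q k - S) / (psi q k - 1))%C by (field; auto).
  rewrite E. replace (S - S)%C with (RtoC 0) by ring. field. auto.
Qed.

Lemma orth_d k : (q | k)%Z -> cs Q (fun i => psi q (k * Z.of_nat i)) = RtoC (IZR q).
Proof.
  intros Hk. rewrite (cs_ext _ _ (fun _ => RtoC 1)).
  - rewrite cs_const. rewrite <- HQ, <- INR_IZR_INZ. ring.
  - intros. apply psi_div. apply hq0. apply Z.divide_mul_l. auto.
Qed.

End Orth.

Section Gauss.
Variable q : Z.
Variable Q : nat.
Hypothesis HQ : Z.of_nat Q = q.
Hypothesis hp : prime q.
Hypothesis h2 : q <> 2%Z.

Lemma hq1' : (1 < q)%Z. Proof. destruct hp; auto. Qed.

Lemma gauss_sq A B C0 : ~ (q | A)%Z ->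
  let G := cs Q (fun i => psi q (A * Z.of_nat i * Z.of_nat i + B * Z.of_nat i + C0)) in
  (G * Cconj G)%C = RtoC (IZR q).
Proof.
  intros HA G.
  pose proof hq1' as hq1. assert (hq : (0 < q)%Z) by lia.
  transitivity (cs Q (fun j => cs Q (fun i =>
     psi q (A * Z.of_nat i * Z.of_nat i + B * Z.of_nat i) * psi q (2 * A * Z.of_nat i * Z.of_nat j)))%C).
  { unfold G at 2. rewrite cs_conj, <- cs_scal. apply cs_ext. intros j _.
    unfold G. rewrite <- cs_scal_r.
    set (y := Z.of_nat j).
    transitivity (cs Q (fun i => (fun x => psi q (A * (x*x - y*y) + B * (x - y))) (Z.of_nat i))).
    { apply cs_ext. intros i _. rewrite psi_conj by auto. rewrite <- !psi_add by auto.
      f_equal. ring. }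
    rewrite <- (cs_shift Q (fun x => psi q (A * (x*x - y*y) + B * (x - y))) j).
    - apply cs_ext. intros i _. rewrite <- !psi_add by auto.
      f_equal. fold y. ring.
    - intros x. rewrite HQ.
      replace (A * ((x + q) * (x + q) - y * y) + B * (x + q - y))%Z
        with (A * (x*x - y*y) + B * (x - y) + q * (2 * A * x + A * q + B))%Z by ring.
      apply psi_per; auto. }
  rewrite cs_exch.
  rewrite (cs_ext _ _ (fun i => psi q (A * Z.of_nat i * Z.of_nat i + B * Z.of_nat i) *
       cs Q (fun j => psi q (2 * A * Z.of_nat i * Z.of_nat j)))%C).
  2:{ intros. rewrite cs_scal. auto. }
  assert (HQp : (0 < Q)%nat) by lia.
  replace Q with (S (Q - 1)) at 1 by lia.
  rewrite cs_front.
  assert (H0 : cs Q (fun j => psi q (2 * A * Z.of_nat 0 * Z.of_nat j)) = RtoC (IZR q)).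
  { apply (orth_d q Q HQ hq1). exists 0%Z. simpl. ring. }
  assert (H1 : cs (Q - 1) (fun i => psi q (A * Z.of_nat (S i) * Z.of_nat (S i) + B * Z.of_nat (S i)) *
      cs Q (fun j => psi q (2 * A * Z.of_nat (S i) * Z.of_nat j)))%C = RtoC 0).
  { rewrite (cs_ext (Q - 1) _ (fun _ => RtoC 0)). apply cs_zero.
    intros i Hi. rewrite (orth_nd q Q HQ hq1). ring.
    intros Hd. apply prime_mult in Hd; auto. destruct Hd as [Hd|Hd].
    apply prime_mult in Hd; auto. destruct Hd as [Hd|Hd].
    + apply Z.divide_pos_le in Hd; lia.
    + auto.
    + apply Z.divide_pos_le in Hd; lia. }
  rewrite H0, H1. simpl Z.of_nat. replace (A * 0 * 0 + B * 0)%Z with 0%Z by ring.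
  rewrite psi_div by (auto; exists 0%Z; ring). ring.
Qed.

Lemma gauss_bound A B C0 : ~ (q | A)%Z ->
  Cmod (cs Q (fun i => psi q (A * Z.of_nat i * Z.of_nat i + B * Z.of_nat i + C0))) = sqrt (IZR q).
Proof.
  intros HA. pose proof (gauss_sq A B C0 HA) as H. simpl in H.
  rewrite <- Cmod2_conj in H. apply (f_equal fst) in H. simpl in H.
  rewrite <- H, Rmult_1_r. rewrite sqrt_square. auto. apply Cmod_ge_0.
Qed.

End Gauss.

Lemma sin_lb3 a : 0 <= a -> a <= 2 -> a / 3 <= sin_lb a.
Proof.
  intros. unfold sin_lb, sin_approx. simpl sum_f_R0. unfold sin_term.
  rewrite !INR_IZR_INZ.
  change (Z.of_nat (Factorial.fact (2 * 0 + 1))) with 1%Z.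
  change (Z.of_nat (Factorial.fact (2 * 1 + 1))) with 6%Z.
  change (Z.of_nat (Factorial.fact (2 * 2 + 1))) with 120%Z.
  change (Z.of_nat (Factorial.fact (2 * 3 + 1))) with 5040%Z.
  simpl pow.
  assert (a*a <= 4) by nra.
  assert (0 <= a*a) by nra.
  assert (0 <= a*a*a*a) by nra.
  assert (a*a*a*a*a*a <= 4 * (a*a*a*a)) by nra.
  nra.
Qed.

Lemma sin_ge3 t : 0 < t -> t <= PI / 2 -> t / 3 <= sin t.
Proof.
  intros. pose proof PI_4. pose proof PI_RGT_0.
  destruct (SIN t) as [H3 _]; try lra.
  pose proof (sin_lb3 t ltac:(lra) ltac:(lra)). lra.
Qed.

Lemma inv_sin_bound t : 0 < t < PI -> / sin t <= 3 / t + 3 / (PI - t).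
Proof.
  intros [H1 H2].
  assert (0 < 3 / t) by (apply Rdiv_lt_0_compat; lra).
  assert (0 < 3 / (PI - t)) by (apply Rdiv_lt_0_compat; lra).
  destruct (Rle_dec t (PI / 2)).
  - pose proof (sin_ge3 t H1 r).
    assert (/ sin t <= 3 / t).
    { unfold Rdiv. rewrite <- (Rinv_inv 3). rewrite <- Rinv_mult.
      apply Rinv_le_contravar. apply Rmult_lt_0_compat; lra. lra. }
    lra.
  - rewrite <- sin_PI_x.
    pose proof (sin_ge3 (PI - t) ltac:(lra) ltac:(lra)).
    assert (/ sin (PI - t) <= 3 / (PI - t)).
    { unfold Rdiv. rewrite <- (Rinv_inv 3). rewrite <- Rinv_mult.
      apply Rinv_le_contravar. apply Rmult_lt_0_compat; lra. lra. }
    lra.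
Qed.

Lemma geo M (g : nat -> C) w : (forall i, g (S i) = w * g i)%C ->
  ((w - 1) * cs M g = g M - g O)%C.
Proof.
  intros Hg. induction M; simpl cs.
  - ring.
  - rewrite Cmult_plus_distr_l, IHM, Hg. ring.
Qed.

Lemma S_bound q M h : (0 < h < q)%Z ->
  Cmod (cs M (fun i => psi q (- h * (Z.of_nat i + 1)))) <= IZR q / IZR h + IZR q / IZR (q - h).
Proof.
  intros Hh. assert (hq : (0 < q)%Z) by lia.
  set (w := psi q (- h)).
  pose proof (geo M (fun i => psi q (- h * (Z.of_nat i + 1))) w) as G.
  set (th := PI * (IZR h / IZR q)).
  assert (Hq : 0 < IZR q) by (apply IZR_lt; lia).
  assert (Hh' : 0 < IZR h) by (apply IZR_lt; lia).
  assert (Hqh : IZR h < IZR q) by (apply IZR_lt; lia).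
  assert (Hth : 0 < th < PI).
  { unfold th. pose proof PI_RGT_0. split.
    - apply Rmult_lt_0_compat; auto. apply Rdiv_lt_0_compat; auto.
    - rewrite <- (Rmult_1_r PI) at 2. apply Rmult_lt_compat_l; auto.
      apply Rlt_div_l; lra. }
  assert (Hs : 0 < sin th) by (apply sin_gt_0; lra).
  assert (Hw : Cmod (w - 1) = 2 * sin th).
  { unfold w, psi. rewrite Cmod_e_sub1. rewrite opp_IZR.
    replace (PI * (- IZR h / IZR q)) with (- th) by (unfold th; field; lra).
    rewrite sin_neg, Rabs_Ropp, Rabs_right; lra. }
  assert (Hb : Cmod (cs M (fun i => psi q (- h * (Z.of_nat i + 1)))) <= / sin th).
  { assert (H : Cmod ((w - 1) * cs M (fun i => psi q (- h * (Z.of_nat i + 1)))) <= 2).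
    { rewrite G.
      2:{ intros i. unfold w. rewrite <- psi_add by auto. f_equal. rewrite Nat2Z.inj_succ. ring. }
      unfold Cminus. eapply Rle_trans. apply Cmod_triangle. rewrite Cmod_opp, !Cmod_psi by auto. lra. }
    rewrite Cmod_mult, Hw in H.
    apply (Rmult_le_reg_l (2 * sin th)). lra.
    replace (2 * sin th * / sin th) with 2 by (field; lra). lra. }
  eapply Rle_trans. apply Hb. eapply Rle_trans. apply inv_sin_bound; auto.
  pose proof PI2_3_2. pose proof PI_RGT_0.
  rewrite minus_IZR.
  replace (3 / th) with ((3 / PI) * (IZR q / IZR h)) by (unfold th; field; lra).
  replace (3 / (PI - th)) with ((3 / PI) * (IZR q / (IZR q - IZR h))) by (unfold th; field; repeat split; try lra; nra).
  assert (0 < IZR q / IZR h) by (apply Rdiv_lt_0_compat; lra).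
  assert (0 < IZR q / (IZR q - IZR h)) by (apply Rdiv_lt_0_compat; lra).
  assert (3 / PI <= 1). { apply Rle_div_l; lra. }
  nra.
Qed.

Lemma ln_le_xm1 x : 0 < x -> ln x <= x - 1.
Proof. intros. pose proof (exp_ineq1_le (ln x)). rewrite exp_ln in H0 by auto. lra. Qed.

Lemma harmonic n : (1 <= n)%nat -> rs n (fun i => / INR (S i)) <= 1 + ln (INR n).
Proof.
  induction n; intros. lia.
  destruct (Nat.eq_dec n 0).
  - subst. simpl. rewrite ln_1. lra.
  - cbn [rs]. pose proof (IHn ltac:(lia)).
    assert (Hn : 1 <= INR n). { apply (le_INR 1). lia. }
    rewrite (S_INR n).
    assert (/ (INR n + 1) <= ln (INR n + 1) - ln (INR n)).
    { pose proof (ln_le_xm1 (INR n / (INR n + 1))) as Hl.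
      rewrite ln_div in Hl by lra.
      assert (INR n / (INR n + 1) - 1 = - / (INR n + 1)) by (field; lra).
      assert (0 < INR n / (INR n + 1)) by (apply Rdiv_lt_0_compat; lra). lra. }
    lra.
Qed.

Lemma Csum_map_seq (g : nat -> C) s n : Csum (map g (seq s n)) = cs n (fun i => g (s + i)%nat).
Proof.
  revert s. induction n; intros s. reflexivity.
  rewrite cs_front. simpl. rewrite IHn. rewrite Nat.add_0_r.
  f_equal. apply cs_ext. intros. f_equal. lia.
Qed.

Lemma Csum_filter (p : Z -> bool) (f : Z -> C) l :
  Csum (map f (filter p l)) = Csum (map (fun x => if p x then f x else RtoC 0) l).
Proof.
  induction l; simpl. reflexivity.
  destruct (p a); simpl; rewrite IHl. reflexivity. ring.
Qed.

Lemma ln2_ge : 1 / 2 <= ln 2.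
Proof.
  assert (exp (1/2) < 2).
  { assert (exp (1/2) * exp (1/2) = exp 1) by (rewrite <- exp_plus; f_equal; lra).
    pose proof exp_le_3. pose proof (exp_pos (1/2)). nra. }
  rewrite <- (ln_exp (1/2)). left. apply ln_increasing. apply exp_pos. auto.
Qed.

Lemma total_bound q Q : Z.of_nat Q = q -> (2 <= Q)%nat ->
  rs (Q - 1) (fun i => IZR q / IZR (Z.of_nat (S i)) + IZR q / IZR (q - Z.of_nat (S i)))
  <= 2 * IZR q * (1 + ln (IZR q)).
Proof.
  intros HQ HQ2.
  rewrite rs_plus.
  assert (E1 : rs (Q - 1) (fun i => IZR q / IZR (Z.of_nat (S i))) = IZR q * rs (Q - 1) (fun i => / INR (S i))).
  { rewrite <- rs_scal. apply rs_ext. intros. rewrite INR_IZR_INZ. reflexivity. }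
  assert (E2 : rs (Q - 1) (fun i => IZR q / IZR (q - Z.of_nat (S i))) = IZR q * rs (Q - 1) (fun i => / INR (S i))).
  { rewrite <- rs_rev, <- rs_scal. apply rs_ext. intros. rewrite INR_IZR_INZ. unfold Rdiv. f_equal. f_equal. f_equal. lia. }
  rewrite E1, E2.
  pose proof (harmonic (Q - 1) ltac:(lia)).
  assert (Hq : IZR q = INR Q) by (rewrite INR_IZR_INZ, HQ; auto).
  assert (ln (INR (Q - 1)) <= ln (IZR q)).
  { rewrite Hq. apply ln_le. apply (lt_INR 0); lia. apply le_INR; lia. }
  assert (0 < IZR q) by (rewrite Hq; apply (lt_INR 0); lia).
  nra.
Qed.

Lemma div_equiv q a m b c x n : (q | c * (a * m) - 1)%Z ->
  ((q | x * x - (a * m * n + b)) <-> (q | c * (x * x - b) - n))%Z.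
Proof.
  intros Hc. split; intros H.
  - replace (c * (x * x - b) - n)%Z with (c * (x * x - (a * m * n + b)) + (c * (a * m) - 1) * n)%Z by ring.
    apply Z.divide_add_r. apply Z.divide_mul_r. auto. apply Z.divide_mul_l. auto.
  - replace (x * x - (a * m * n + b))%Z with ((a * m) * (c * (x * x - b) - n) - (c * (a * m) - 1) * (x * x - b))%Z by ring.
    apply Z.divide_sub_r. apply Z.divide_mul_r. auto. apply Z.divide_mul_l. auto.
Qed.

Lemma indicator q Q k : Z.of_nat Q = q -> (1 < q)%Z ->
  (RtoC (/ IZR q) * cs Q (fun h => psi q (Z.of_nat h * k)))%C =
  if Z.eqb (k mod q) 0 then RtoC 1 else RtoC 0.
Proof.
  intros HQ hq.
  rewrite (cs_ext _ _ (fun h => psi q (k * Z.of_nat h))) by (intros; f_equal; ring).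
  destruct (Z.eqb_spec (k mod q) 0).
  - assert (Hd : (q | k)%Z) by (apply Z.mod_divide; lia).
    assert (Hn : IZR q <> 0) by (apply not_0_IZR; lia).
    rewrite (orth_d q Q HQ hq k Hd). rewrite <- RtoC_mult, Rinv_l by exact Hn. auto.
  - rewrite (orth_nd q Q HQ hq). ring. intro. apply n. apply Z.mod_divide; [lia | auto].
Qed.

Theorem theorem2p1 :
  exists c : R, 0 < c /\
    forall (q : Z), prime q ->
    forall (N : R), 1 <= N ->
    forall (a b m lam : Z), Z.gcd (a * m * lam) q = 1%Z ->
      Cmod (U q a b m lam N) <= c * sqrt (IZR q) * ln (IZR q).
Proof.
  exists 12. split. lra.
  intros q hp N HN a b m lam Hg.
  assert (hq1 : (1 < q)%Z) by (destruct hp; auto).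
  assert (hq0 : (0 < q)%Z) by lia.
  set (Q := Z.to_nat q).
  assert (HQ : Z.of_nat Q = q) by (unfold Q; apply Z2Nat.id; lia).
  assert (HQ2 : (2 <= Q)%nat) by lia.
  assert (Hlam : ~ (q | lam)%Z).
  { intro H. assert (H1 : (q | 1)%Z).
    { rewrite <- Hg. apply Z.gcd_greatest. apply Z.divide_mul_r; auto. apply Z.divide_refl. }
    apply Z.divide_pos_le in H1; lia. }
  assert (Ham : ~ (q | a * m)%Z).
  { intro H. assert (H1 : (q | 1)%Z).
    { rewrite <- Hg. apply Z.gcd_greatest. apply Z.divide_mul_l; auto. apply Z.divide_refl. }
    apply Z.divide_pos_le in H1; lia. }
  destruct (rel_prime_bezout _ _ (prime_rel_prime q hp (a * m) Ham)) as [u v Huv].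
  assert (Hc : (q | v * (a * m) - 1)%Z) by (exists (- u)%Z; lia).
  set (M := Z.to_nat (Int_part N)).
  set (Sm := fun h : nat => cs M (fun i => psi q (- Z.of_nat h * (Z.of_nat i + 1)))).
  set (G := fun h : nat => cs Q (fun j => psi q ((Z.of_nat h * v) * Z.of_nat j * Z.of_nat j
               + lam * Z.of_nat j + - (Z.of_nat h * v * b)))).
  assert (EU : U q a b m lam N = (RtoC (/ IZR q) * cs Q (fun h => Sm h * G h))%C).
  { unfold U, n_range, x_range. rewrite Csum_map_seq. fold M.
    transitivity (cs M (fun i => cs Q (fun j =>
      (RtoC (/ IZR q) * cs Q (fun h => psi q (Z.of_nat h * (v * (Z.of_nat j * Z.of_nat j - b) - Z.of_nat (1 + i)))))
       * psi q (lam * Z.of_nat j))))%C.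
    { apply cs_ext. intros i _. rewrite Csum_filter, map_map, Csum_map_seq. fold Q.
      apply cs_ext. intros j _. simpl (0 + j)%nat.
      rewrite (indicator q Q _ HQ hq1).
      assert (E : e (IZR lam * IZR (Z.of_nat j) / IZR q) = psi q (lam * Z.of_nat j)).
      { unfold psi. rewrite mult_IZR. auto. }
      rewrite E.
      pose proof (div_equiv q a m b v (Z.of_nat j) (Z.of_nat (1 + i)) Hc) as Hdiv.
      destruct (Z.eqb_spec ((Z.of_nat j * Z.of_nat j - (a * m * Z.of_nat (1 + i) + b)) mod q) 0) as [E1|E1];
      destruct (Z.eqb_spec ((v * (Z.of_nat j * Z.of_nat j - b) - Z.of_nat (1 + i)) mod q) 0) as [E2|E2].
      - ring.
      - exfalso. apply E2. apply Z.mod_divide; [lia|]. apply Hdiv. apply Z.mod_divide; [lia|auto].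
      - exfalso. apply E1. apply Z.mod_divide; [lia|]. apply Hdiv. apply Z.mod_divide; [lia|auto].
      - ring. }
    transitivity (RtoC (/ IZR q) * cs M (fun i => cs Q (fun j => cs Q (fun h =>
      psi q (- Z.of_nat h * (Z.of_nat i + 1)) * psi q ((Z.of_nat h * v) * Z.of_nat j * Z.of_nat j
               + lam * Z.of_nat j + - (Z.of_nat h * v * b))))))%C.
    { rewrite <- cs_scal. apply cs_ext. intros i _. rewrite <- cs_scal. apply cs_ext. intros j _.
      rewrite <- Cmult_assoc. f_equal. rewrite <- cs_scal_r. apply cs_ext. intros h _.
      rewrite <- !psi_add by auto. f_equal.
      replace (Z.of_nat (1 + i)) with (Z.of_nat i + 1)%Z by lia. ring. }
    f_equal.
    rewrite (cs_ext M _ (fun i => cs Q (fun h => cs Q (fun j =>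
      psi q (- Z.of_nat h * (Z.of_nat i + 1)) * psi q ((Z.of_nat h * v) * Z.of_nat j * Z.of_nat j
               + lam * Z.of_nat j + - (Z.of_nat h * v * b)))))%C).
    2:{ intros. apply cs_exch. }
    rewrite cs_exch. apply cs_ext. intros h _. unfold Sm, G.
    rewrite <- cs_scal_r. apply cs_ext. intros i _. rewrite <- cs_scal. reflexivity. }
  rewrite EU, Cmod_mult, Cmod_R.
  assert (Hqr : 0 < IZR q) by (apply IZR_lt; lia).
  rewrite Rabs_right by (left; apply Rinv_0_lt_compat; auto).
  assert (HG0 : G O = RtoC 0).
  { unfold G. rewrite (cs_ext _ _ (fun j => psi q (lam * Z.of_nat j))).
    apply (orth_nd q Q HQ hq1); auto.
    intros. f_equal. simpl. ring. }
  assert (HGb : forall i, (i < Q - 1)%nat -> Cmod (G (S i)) <= 2 * sqrt (IZR q)).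
  { intros i Hi.
    assert (HA : ~ (q | Z.of_nat (S i) * v)%Z).
    { intro Hd. apply prime_mult in Hd; auto. destruct Hd as [Hd|Hd].
      - apply Z.divide_pos_le in Hd; lia.
      - assert (H1 : (q | 1)%Z).
        { replace 1%Z with (v * (a * m) - (v * (a * m) - 1))%Z by ring.
          apply Z.divide_sub_r; auto. apply Z.divide_mul_l; auto. }
        apply Z.divide_pos_le in H1; lia. }
    assert (Hs : 0 <= sqrt (IZR q)) by apply sqrt_pos.
    destruct (Z.eq_dec q 2) as [E2|E2].
    - unfold G. eapply Rle_trans. apply Cmod_cs.
      rewrite (rs_ext _ _ (fun _ => 1)) by (intros; apply Cmod_psi; auto).
      rewrite rs_const, Rmult_1_r, INR_IZR_INZ, HQ.
      assert (1 <= sqrt (IZR q)) by (rewrite <- sqrt_1; apply sqrt_le_1_alt; apply IZR_le; lia).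
      rewrite E2 in *. lra.
    - unfold G. rewrite (gauss_bound q Q HQ hp E2); auto. lra. }
  assert (HSb : forall i, (i < Q - 1)%nat ->
     Cmod (Sm (S i)) <= IZR q / IZR (Z.of_nat (S i)) + IZR q / IZR (q - Z.of_nat (S i))).
  { intros i Hi. unfold Sm. apply S_bound. lia. }
  eapply Rle_trans.
  { apply Rmult_le_compat_l. left; apply Rinv_0_lt_compat; auto. apply Cmod_cs. }
  replace Q with (S (Q - 1)) at 1 by lia.
  rewrite rs_front. rewrite HG0, Cmult_0_r, Cmod_0, Rplus_0_l.
  eapply Rle_trans.
  { apply Rmult_le_compat_l. left; apply Rinv_0_lt_compat; auto.
    apply (rs_le _ _ (fun i => (IZR q / IZR (Z.of_nat (S i)) + IZR q / IZR (q - Z.of_nat (S i))) * (2 * sqrt (IZR q)))).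
    intros i Hi. rewrite Cmod_mult. apply Rmult_le_compat; auto using Cmod_ge_0. }
  rewrite (rs_ext _ _ (fun i => (2 * sqrt (IZR q)) * (IZR q / IZR (Z.of_nat (S i)) + IZR q / IZR (q - Z.of_nat (S i)))))
    by (intros; ring).
  rewrite rs_scal.
  pose proof (total_bound q Q HQ HQ2).
  assert (Hs : 0 <= sqrt (IZR q)) by apply sqrt_pos.
  assert (Hln : 1 / 2 <= ln (IZR q)).
  { eapply Rle_trans. apply ln2_ge. apply ln_le. lra. apply IZR_le. lia. }
  assert (/ IZR q * (2 * sqrt (IZR q) * (2 * IZR q * (1 + ln (IZR q)))) = 4 * sqrt (IZR q) * (1 + ln (IZR q)))
    by (field; lra).
  assert (/ IZR q * (2 * sqrt (IZR q) * rs (Q - 1) (fun i => IZR q / IZR (Z.of_nat (S i)) + IZR q / IZR (q - Z.of_nat (S i))))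
     <= / IZR q * (2 * sqrt (IZR q) * (2 * IZR q * (1 + ln (IZR q))))).
  { apply Rmult_le_compat_l. left; apply Rinv_0_lt_compat; auto.
    apply Rmult_le_compat_l. lra. auto. }
  nra.
Qed.
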